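(* Let $(\mathsf{E},\mathcal{F},\mu)$ be a probability space and let $P$ be a $\mu$-invariant Markov kernel on $\mathsf{E}$. Let $\Phi:\mathrm{L}^{2}(\mu)\to[0,\infty]$ satisfy, for all $f\in\mathrm{L}^{2}(\mu)$, $c>0$ and $n\in\mathbb{N}$, \[ \Phi(cf)=c^{2}\Phi(f),\qquad\Phi(P^{n}f)\le\Phi(f),\qquad\|f-\mu(f)\|_{2}^{2}\le a\,\Phi(f-\mu(f)), \] where $a:=\sup_{f\in\mathrm{L}_{0}^{2}(\mu)\setminus\{0\}}\|f\|_{2}^{2}/\Phi(f)\in(0,\infty)$. Suppose that $\beta:(0,\infty)\to[0,\infty)$ is decreasing with $\beta(s)\downarrow0$ as $s\to\infty$ and that for all $f\in\mathrm{L}_{0}^{2}(\mu)$ and all $s>0$, \[ \|f\|_{2}^{2}\le s\,\mathcal{E}(P^{*}P,f)+\beta(s)\Phi(f). \] Let $K(u):=u\beta(1/u)$ for $u>0$, $K(0):=0$, let $K^{*}(v):=\sup_{u\ge0}\{uv-K(u)\}$ for $v\ge0$, and let $F_{a}(x):=\int_{x}^{a}\frac{\mathrm{d}v}{K^{*}(v)}$ for $x\in(0,a]$. Then $F_{a}$ is continuous, convex and strictly decreasing with $F_{a}(x)\to\infty$ as $x\downarrow0$, so it has an inverse $F_{a}^{-1}:(0,\infty)\to(0,a)$, and for every $f\in\mathrm{L}_{0}^{2}(\mu)$ with $0<\Phi(f)<\infty$ and every $n\in\mathbb{N}$, \[ \|P^{n}f\|_{2}^{2}\le\Phi(f)\,F_{a}^{-1}(n).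 \]
   Context: $\mathrm{L}^{2}(\mu)$ is the real Hilbert space of square-integrable functions with inner product $\langle f,g\rangle=\int fg\,\mathrm{d}\mu$ and norm $\|\cdot\|_{2}$; $\mathrm{L}_{0}^{2}(\mu)=\{f\in\mathrm{L}^{2}(\mu):\mu(f)=0\}$. $P$ acts on functions by $Pf(x)=\int P(x,\mathrm{d}y)f(y)$, and $P^{*}$ is its adjoint in $\mathrm{L}^{2}(\mu)$. For a bounded operator $T$ on $\mathrm{L}^{2}(\mu)$, the Dirichlet form is $\mathcal{E}(T,f):=\langle(\mathrm{Id}-T)f,f\rangle$. $\mathbb{N}=\{1,2,\dots\}$. *)

(* Defs.v *)
From HB Require Import structures.
From mathcomp Require Import all_boot all_order all_algebra.
From mathcomp Require Import all_classical all_reals all_analysis.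
Set Implicit Arguments. Unset Strict Implicit. Unset Printing Implicit Defensive.
Import Order.TTheory GRing.Theory Num.Theory.
Import numFieldNormedType.Exports.
Local Open Scope classical_set_scope.
Local Open Scope ring_scope.

Section L2defs.
Context {d : measure_display} {T : measurableType d} {R : realType}.

Definition L2 (mu : {measure set T -> \bar R}) (f : T -> R) : Prop :=
  measurable_fun [set: T] f /\ (\int[mu]_x ((f x) ^+ 2)%:E < +oo)%E.

Definition mean (mu : {measure set T -> \bar R}) (f : T -> R) : R :=
  fine (\int[mu]_x (f x)%:E).

Definition L20 (mu : {measure set T -> \bar R}) (f : T -> R) : Prop :=
  L2 mu f /\ mean mu f = 0.

Definition ip (mu : {measure set T -> \bar R}) (f g : T -> R) : R :=
  fine (\int[mu]_x (f x * g x)%:E).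

Definition norm2 (mu : {measure set T -> \bar R}) (f : T -> R) : R :=
  fine (\int[mu]_x ((f x) ^+ 2)%:E).

Definition dirichlet (mu : {measure set T -> \bar R})
  (Top : (T -> R) -> (T -> R)) (f : T -> R) : R :=
  ip mu (fun x => f x - Top f x) f.

Definition kop (P : R.-pker T ~> T) (f : T -> R) : T -> R :=
  fun x => fine (\int[P x]_y (f y)%:E).

Definition kinvariant (mu : {measure set T -> \bar R}) (P : R.-pker T ~> T) :=
  forall A, measurable A -> (\int[mu]_x P x A = mu A)%E.

End L2defs.

Section Fdefs.
Context {R : realType}.

Definition Kfun (beta : R -> R) (u : R) : R :=
  if 0 < u then u * beta (1 / u) else 0.

Definition Kstar (beta : R -> R) (v : R) : \bar R :=
  ereal_sup [set ((u * v - Kfun beta u)%:E) | u in [set u : R | 0 <= u]].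

(* F_a(x) = \int_x^a dv / K^*(v)  (with 1/(+oo) = 0) *)
Definition Fa (beta : R -> R) (a x : R) : \bar R :=
  (\int[lebesgue_measure]_(v in `[x, a]) (Kstar beta v)^-1)%E.

End Fdefs.

(* Main.v *)
Require Import Defs.
From HB Require Import structures.
From mathcomp Require Import all_boot all_order all_algebra.
From mathcomp Require Import all_classical all_reals all_analysis.
From mathcomp Require Import measurable_realfun.
From mathcomp Require Import ring lra.
Import Order.TTheory GRing.Theory Num.Theory.
Import numFieldNormedType.Exports.
Local Open Scope classical_set_scope.
Local Open Scope ring_scope.
Set Implicit Arguments. Unset Strict Implicit. Unset Printing Implicit Defensive.
Section gen.
Context d (T : measurableType d) (R : realType).
Local Open Scope ereal_scope.

Lemma m_integrable_cst (m : {measure set T -> \bar R}) (hm : m setT = 1) (c : R) :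
  m.-integrable setT (EFin \o cst c).
Proof.
apply/integrableP; split; first exact/measurable_EFinP/measurable_cst.
rewrite /= integral_cst// hm mule1; exact: ltry.
Qed.

Lemma abs_le_1sqr (r : R) : (`|r| <= 1 + r ^+ 2)%R.
Proof.
have h : (`|r| ^+ 2 = r ^+ 2)%R by rewrite real_normK// num_real.
have h0 : (0 <= `|r|)%R by [].
rewrite -h; nra.
Qed.

Lemma sqr_integrable (m : {measure set T -> \bar R}) (f : T -> R) :
  measurable_fun setT f -> \int[m]_x ((f x) ^+ 2)%:E < +oo ->
  m.-integrable setT (EFin \o (fun x => f x ^+ 2)%R).
Proof.
move=> mf fi; apply/integrableP; split.
  by apply/measurable_EFinP; exact: measurable_funX.
suff -> : \int[m]_x `|(EFin \o (fun x0 => (f x0 ^+ 2)%R)) x| =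
  \int[m]_x (f x ^+ 2)%:E by [].
apply: eq_integral => x _ /=.
by rewrite ger0_norm// sqr_ge0.
Qed.

Lemma L2_integrable (m : {measure set T -> \bar R}) (hm : m setT = 1) (f : T -> R) :
  measurable_fun setT f -> \int[m]_x ((f x) ^+ 2)%:E < +oo ->
  m.-integrable setT (EFin \o f).
Proof.
move=> mf fi.
have i2 := sqr_integrable mf fi.
have := integrableD measurableT (m_integrable_cst hm 1) i2.
apply: le_integrable => //; first exact/measurable_EFinP.
move=> x _ /=; rewrite ?abse_EFin lee_fin.
apply: (le_trans (abs_le_1sqr (f x))).
by rewrite ger0_norm// addr_ge0// sqr_ge0.
Qed.

Lemma L2_mul_integrable (m : {measure set T -> \bar R}) (f g : T -> R) :
  measurable_fun setT f -> \int[m]_x ((f x) ^+ 2)%:E < +oo ->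
  measurable_fun setT g -> \int[m]_x ((g x) ^+ 2)%:E < +oo ->
  m.-integrable setT (EFin \o (fun x => f x * g x)%R).
Proof.
move=> mf fi mg gi.
have := integrableD measurableT (sqr_integrable mf fi) (sqr_integrable mg gi).
apply: le_integrable => //.
  by apply/measurable_EFinP; exact: measurable_funM.
move=> x _ /=; rewrite ?abse_EFin lee_fin.
have h1 : (`|f x| ^+ 2 = f x ^+ 2)%R by rewrite real_normK// num_real.
have h2 : (`|g x| ^+ 2 = g x ^+ 2)%R by rewrite real_normK// num_real.
have a0 : (0 <= `|f x|)%R by [].
have b0 : (0 <= `|g x|)%R by [].
rewrite normrM [X in (_ <= X)%R]ger0_norm ?addr_ge0 ?sqr_ge0// -h1 -h2; nra.
Qed.

End gen.
Section op.
Context d (T : measurableType d) (R : realType) (mu : probability T R)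
  (P : R.-pker T ~> T).
Hypothesis Pinv : kinvariant mu P.
Local Open Scope ereal_scope.
Import HBNNSimple.

Let inv_nnsfun (f : {nnsfun T >-> R}) :
  \int[mu]_x (\int[P x]_y (f y)%:E) = \int[mu]_y (f y)%:E.
Proof.
under [in RHS]eq_integral do rewrite fimfunE -fsumEFin//.
rewrite [RHS]ge0_integral_fsum//; last 2 first.
  - by move=> r; exact/measurable_EFinP/measurableT_comp.
  - by move=> r z _; rewrite EFinM nnfun_muleindic_ge0.
under [in LHS]eq_integral.
  move=> y _.
  under eq_integral.
    by move=> z _; rewrite fimfunE -fsumEFin//; over.
  rewrite /= ge0_integral_fsum//; last 2 first.
    - by move=> r; exact/measurable_EFinP/measurableT_comp.
    - by move=> r z _; rewrite EFinM nnfun_muleindic_ge0.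
  under eq_fsbigr.
    move=> r _.
    rewrite (integralZl_indic _ (fun r => f @^-1` [set r]))//; last first.
      by move=> r0; rewrite preimage_nnfun0.
    rewrite integral_indic// setIT.
    over.
  over.
rewrite /= ge0_integral_fsum//; last 2 first.
  - move=> r; apply: measurable_funeM.
    exact: measurable_kernel.
  - move=> n y _.
    have := mulemu_ge0 (fun n => f @^-1` [set n]).
    by apply; exact: preimage_nnfun0.
apply: eq_fsbigr => r _.
rewrite (integralZl_indic _ (fun r => f @^-1` [set r]))//; last first.
  exact: preimage_nnfun0.
have [r0|r0] := leP 0%R r.
  rewrite ge0_integralZl//; last exact: measurable_kernel.
  by rewrite integral_indic// setIT Pinv.
rewrite preimage_nnfun0// integral0_eq.
  by rewrite integral_indic// set0I measure0 mule0.
by move=> y _; rewrite measure0 mule0.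
Qed.

Lemma integral_Pinv (h : T -> \bar R) : (forall z, 0 <= h z) ->
  measurable_fun setT h ->
  \int[mu]_x (\int[P x]_y h y) = \int[mu]_y h y.
Proof.
move=> f0 mf.
pose f_ := nnsfun_approx measurableT mf.
transitivity (\int[mu]_x \int[P x]_z (lim ((f_ n z)%:E @[n --> \oo]))).
  apply/eq_integral => x _; apply/eq_integral => z _.
  by apply/esym/cvg_lim => //=; exact: cvg_nnsfun_approx.
transitivity (\int[mu]_z (lim ((f_ n z)%:E @[n --> \oo]))); last first.
  apply/eq_integral => z _.
  by apply/cvg_lim => //=; exact: cvg_nnsfun_approx.
rewrite [RHS]monotone_convergence//; last 3 first.
  by move=> n; exact/measurable_EFinP.
  by move=> n z _; rewrite lee_fin.
  by move=> z _ a b ab; rewrite lee_fin; exact/lefP/nd_nnsfun_approx.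
rewrite (_ : (fun _ => _) =
    (fun n => \int[mu]_x (\int[P x]_z (f_ n z)%:E)))//; last first.
  by apply/funext => n; rewrite inv_nnsfun.
transitivity (\int[mu]_x lim ((\int[P x]_z (f_ n z)%:E) @[n --> \oo])).
  apply: eq_integral => y _; rewrite -monotone_convergence//; last 3 first.
  - by move=> n; exact/measurable_EFinP.
  - by move=> n z _; rewrite lee_fin.
  - by move=> z _ a b ab; rewrite lee_fin; exact/lefP/nd_nnsfun_approx.
rewrite -monotone_convergence//.
- move=> n; apply: measurable_fun_integral_kernel => //.
  + by move=> U mU; exact: measurable_kernel.
  + by move=> z; rewrite lee_fin.
  + exact/measurable_EFinP.
- by move=> n y _; apply: integral_ge0 => // z _; rewrite lee_fin.
- move=> y _ a b ab; apply: ge0_le_integral => //.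
  + by move=> z _; rewrite lee_fin.
  + exact/measurable_EFinP.
  + exact/measurable_EFinP.
  + by move=> z _; rewrite lee_fin; exact/lefP/nd_nnsfun_approx.
Qed.

Lemma measurable_kop (f : T -> R) : measurable_fun setT f ->
  measurable_fun setT (kop P f).
Proof.
move=> mf.
have mF : measurable_fun setT (EFin \o f) by exact/measurable_EFinP.
have mA : measurable_fun setT (fun x => \int[P x]_y ((EFin \o f)^\+ y)).
  apply: measurable_fun_integral_kernel.
  - by move=> U mU; exact: measurable_kernel.
  - by move=> z; exact: funepos_ge0.
  - exact: measurable_funepos.
have mB : measurable_fun setT (fun x => \int[P x]_y ((EFin \o f)^\- y)).
  apply: measurable_fun_integral_kernel.
  - by move=> U mU; exact: measurable_kernel.
  - by move=> z; exact: funeneg_ge0.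
  - exact: measurable_funeneg.
rewrite /kop.
have -> : (fun x => fine (\int[P x]_y (f y)%:E)) =
    fine \o ((fun x => \int[P x]_y ((EFin \o f)^\+ y)) \-
              (fun x => \int[P x]_y ((EFin \o f)^\- y))).
  by apply/funext => x /=; rewrite [in LHS]integralE.
apply: measurableT_comp; first exact: (fine_measurable measurableT).
exact: emeasurable_funB.
Qed.

Lemma kop_sqr_le (f : T -> R) x : measurable_fun setT f ->
  ((kop P f x) ^+ 2)%:E <= \int[P x]_y ((f y) ^+ 2)%:E.
Proof.
move=> mf.
have hP : P x setT = 1 := @prob_kernel _ _ _ _ _ P x.
set I := \int[P x]_y _.
have I0 : 0 <= I by apply: integral_ge0 => y _; rewrite lee_fin sqr_ge0.
have [->|Ioo] := eqVneq I +oo; first exact: leey.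
have Ilt : I < +oo by rewrite lt_neqAle Ioo leey.
have If : I \is a fin_num by rewrite ge0_fin_numE.
have i2 := sqr_integrable mf Ilt.
have i1 := L2_integrable hP mf Ilt.
set c := kop P f x.
have iZ : (P x).-integrable setT (EFin \o (fun y => c * 2 * f y)%R).
  have := integrableZl measurableT (c * 2)%R i1.
  by apply: eq_integrable => // y _ /=; rewrite EFinM.
have iC : (P x).-integrable setT (EFin \o (fun y => c ^+ 2)%R).
  exact: (m_integrable_cst hP (c ^+ 2)).
have ic : (P x).-integrable setT (EFin \o (fun y => c * 2 * f y - c ^+ 2)%R).
  have := integrableB measurableT iZ iC.
  by apply: eq_integrable => // y _ /=; rewrite EFinB.
have key : forall y, (c * 2 * f y - c ^+ 2 <= f y ^+ 2)%R
  by move=> y; have := sqr_ge0 (f y - c); nra.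
have H := le_Rintegral measurableT ic i2 (fun y _ => key y).
rewrite RintegralB// RintegralZl// Rintegral_cst// hP /= in H.
change (Rintegral (P x) setT f) with c in H.
rewrite -(fineK If) lee_fin.
change (fine I) with (Rintegral (P x) setT (fun y => f y ^+ 2)%R).
have Hc : Rintegral (P x) setT (fun y => f y) = c by [].
rewrite Hc in H; nra.
Qed.

Lemma kop_L2 f : L2 mu f ->
  L2 mu (kop P f) /\ (norm2 mu (kop P f) <= norm2 mu f)%R.
Proof.
move=> [mf fi].
have mk := measurable_kop mf.
have m2 : measurable_fun setT (fun y => ((f y)^+2)%:E).
  by apply/measurable_EFinP; exact: measurable_funX.
have le1 : \int[mu]_x ((kop P f x) ^+ 2)%:E <= \int[mu]_x ((f x) ^+ 2)%:E.
  rewrite -(integral_Pinv (h := fun y => ((f y)^+2)%:E)); last 2 first.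
    by move=> z; rewrite lee_fin sqr_ge0.
    exact: m2.
  apply: ge0_le_integral => //.
  - by move=> x _; rewrite lee_fin sqr_ge0.
  - by apply/measurable_EFinP; exact: measurable_funX.
  - apply: measurable_fun_integral_kernel => //.
    + by move=> U mU; exact: measurable_kernel.
    + by move=> z; rewrite lee_fin sqr_ge0.
  - by move=> x _; exact: kop_sqr_le.
have ki : \int[mu]_x ((kop P f x) ^+ 2)%:E < +oo by exact: le_lt_trans le1 fi.
split; first by split.
apply: fine_le => //; rewrite ge0_fin_numE//; apply: integral_ge0 => x _;
  by rewrite lee_fin sqr_ge0.
Qed.

Lemma kop_mean f : L2 mu f -> mean mu (kop P f) = mean mu f.
Proof.
move=> [mf fi].
have hmu : mu setT = 1 := probability_setT mu.
have i1 := L2_integrable hmu mf fi.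
set F := EFin \o f.
have mF : measurable_fun setT F by exact/measurable_EFinP.
pose A x := \int[P x]_y (F^\+ y).
pose B x := \int[P x]_y (F^\- y).
have mA : measurable_fun setT A.
  apply: measurable_fun_integral_kernel.
  - by move=> U mU; exact: measurable_kernel.
  - by move=> z; exact: funepos_ge0.
  - exact: measurable_funepos.
have mB : measurable_fun setT B.
  apply: measurable_fun_integral_kernel.
  - by move=> U mU; exact: measurable_kernel.
  - by move=> z; exact: funeneg_ge0.
  - exact: measurable_funeneg.
have A0 x : 0 <= A x by apply: integral_ge0 => y _; exact: funepos_ge0.
have B0 x : 0 <= B x by apply: integral_ge0 => y _; exact: funeneg_ge0.
have intA : \int[mu]_x A x = \int[mu]_x F^\+ x.
  rewrite /A integral_Pinv//; by [move=> z; exact: funepos_ge0|exact: measurable_funepos].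
have intB : \int[mu]_x B x = \int[mu]_x F^\- x.
  rewrite /B integral_Pinv//; by [move=> z; exact: funeneg_ge0|exact: measurable_funeneg].
have iA : mu.-integrable setT A.
  apply/integrableP; split => //.
  under eq_integral => x _ do rewrite gee0_abs//.
  by rewrite intA -ge0_fin_numE ?integrable_pos_fin_num//; apply: integral_ge0 => x _;
    exact: funepos_ge0.
have iB : mu.-integrable setT B.
  apply/integrableP; split => //.
  under eq_integral => x _ do rewrite gee0_abs//.
  by rewrite intB -ge0_fin_numE ?integrable_neg_fin_num//; apply: integral_ge0 => x _;
    exact: funeneg_ge0.
have ae1 : ae_eq mu setT (EFin \o kop P f) (A \- B).
  apply: filterS2 (integrable_ae measurableT iA) (integrable_ae measurableT iB).
  move=> x hA hB Dx; have Af := hA Dx; have Bf := hB Dx.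
  by rewrite /= /kop integralE fineK // fin_numB Af Bf.
rewrite /mean (ae_eq_integral (A \- B)) //; last first.
all: try exact: emeasurable_funB.
all: try (apply/measurable_EFinP; exact: measurable_kop).
rewrite integralB // [in RHS]integralE.
by rewrite intA intB.
Qed.

Lemma dirichlet_kop (Pstar : (T -> R) -> (T -> R))
  (hPs : forall g, L2 mu g -> L2 mu (Pstar g))
  (adj : forall f g, L2 mu f -> L2 mu g -> ip mu (kop P f) g = ip mu f (Pstar g))
  f : L2 mu f ->
  dirichlet mu (fun g => Pstar (kop P g)) f = (norm2 mu f - norm2 mu (kop P f))%R.
Proof.
move=> hf; have [hk _] := kop_L2 hf; have hs := hPs _ hk.
have [mf fi] := hf; have [ms si] := hs.
rewrite /dirichlet /ip.
change (Rintegral mu setT (fun x => (f x - Pstar (kop P f) x) * f x)%R =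
  (norm2 mu f - norm2 mu (kop P f))%R).
rewrite (@eq_Rintegral _ _ _ _ _ (fun x => (f x ^+ 2 - Pstar (kop P f) x * f x)%R));
  last by move=> x _; rewrite mulrBl expr2.
rewrite RintegralB //; try exact: sqr_integrable; try exact: L2_mul_integrable.
congr (_ - _)%R.
have -> : Rintegral mu setT (fun x => Pstar (kop P f) x * f x)%R =
    ip mu f (Pstar (kop P f)).
  by apply: eq_Rintegral => x _; rewrite mulrC.
by rewrite -adj //.
Qed.

End op.

Section core.
Context d (T : measurableType d) (R : realType).

Lemma norm2_ge0 (mu : {measure set T -> \bar R}) f : (0 <= norm2 mu f)%R.
Proof. by apply: fine_ge0; apply: integral_ge0 => x _; rewrite lee_fin sqr_ge0. Qed.

Lemma core (mu : {measure set T -> \bar R}) (beta : R -> R) (Phi : (T -> R) -> \bar R)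
  (E : (T -> R) -> R) (f : T -> R) (phi N' : R) :
  (forall s : R, 0 < s -> ((norm2 mu f)%:E <= ((s * E f)%R)%:E + (beta s)%:E * Phi f)%E) ->
  (forall s, 0 < s -> 0 <= beta s) ->
  0 < phi -> (0 <= Phi f)%E -> (Phi f <= phi%:E)%E ->
  E f = norm2 mu f - N' -> 0 <= E f ->
  (Kstar beta (norm2 mu f / phi) <= ((norm2 mu f - N') / phi)%:E)%E.
Proof.
move=> hb b0 phi0 Phi0 Phile Ee E0.
apply: ge_ereal_sup => _ [u /= u0 <-]; rewrite lee_fin.
rewrite /Kfun; have [upos|] := ltP 0 u; last first.
  move=> u0'; have -> : u = 0 by apply/eqP; rewrite eq_le u0' u0.
  by rewrite mul0r subr0 -Ee divr_ge0// ltW.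
set N := norm2 mu f.
have s0 : 0 < 1 / u by rewrite divr_gt0.
have := hb _ s0.
have hb2 : ((beta (1 / u))%:E * Phi f <= (beta (1/u))%:E * phi%:E)%E.
  by apply: lee_wpmul2l => //; rewrite lee_fin b0.
move=> /le_trans /(_ (leeD2l _ hb2)).
rewrite -EFinM -EFinD lee_fin => H.
rewrite -Ee.
have H2 : u * N <= E f + u * beta (1 / u) * phi.
  have := ler_wpM2l (ltW upos) H.
  suff -> : u * (1 / u * E f + beta (1 / u) * phi) = E f + u * beta (1 / u) * phi by [].
  by field; rewrite gt_eqF.
rewrite ler_pdivlMr//.
have -> : (u * (N / phi) - u * beta (1 / u)) * phi = u * N - u * beta (1/u) * phi.
  by field; rewrite gt_eqF.
lra.
Qed.

End core.
Section ana.
Context (R : realType) (beta : R -> R) (a : R).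
Hypothesis a0 : 0 < a.
Hypothesis b0 : forall s, 0 < s -> 0 <= beta s.
Hypothesis bdec : forall s t, 0 < s -> s <= t -> beta t <= beta s.
Hypothesis blim : beta x @[x --> +oo] --> 0.
Hypothesis Kfin : forall v, 0 < v < a -> (Kstar beta v < +oo)%E.

Local Notation K := (Kstar beta).
Local Notation leb := (@lebesgue_measure R).

Lemma Kfun_ge0 u : 0 <= Kfun beta u.
Proof.
rewrite /Kfun; case: ifP => // u0; apply: mulr_ge0; first exact: ltW.
by apply: b0; rewrite divr_gt0.
Qed.

Lemma Kfun0 : Kfun beta 0 = 0.
Proof. by rewrite /Kfun ltxx. Qed.

Lemma Kfun_pos u : 0 < u -> Kfun beta u = u * beta (1 / u).
Proof. by rewrite /Kfun => ->. Qed.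

Lemma K_ge0 v : (0 <= K v)%E.
Proof.
apply: ereal_sup_ge; exists ((0 * v - Kfun beta 0)%:E); first by exists 0; rewrite //=.
by rewrite Kfun0 mul0r subrr.
Qed.

Lemma K_le v w : v <= w -> (K v <= K w)%E.
Proof.
move=> vw; apply: ge_ereal_sup => _ [u /= u0 <-].
apply: ereal_sup_ge; exists ((u * w - Kfun beta u)%:E); first by exists u.
by rewrite lee_fin lerD2r; exact: ler_wpM2l.
Qed.

Lemma beta_small v : 0 < v -> exists t, 0 < t /\ beta t < v.
Proof.
move=> v0.
have := (cvgrPdist_lt _ _).1 blim v v0.
move=> [M [Mr HM]].
exists (Num.max M 0 + 1); split.
  by apply: (lt_le_trans ltr01); rewrite lerDr le_max lexx orbT.
have : M < Num.max M 0 + 1.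
  have hM : M <= Num.max M 0 by rewrite le_max lexx.
  by apply: (le_lt_trans hM); rewrite ltrDl.
move/HM; rewrite sub0r normrN => /(le_lt_trans (ler_norm _)); exact.
Qed.

Lemma K_gt0 v : 0 < v -> (0 < K v)%E.
Proof.
move=> v0; have [t [t0 bt]] := beta_small v0.
apply: (@lt_le_trans _ _ (((1 / t) * v - Kfun beta (1 / t))%:E)); last first.
  apply: ereal_sup_ge; exists (((1 / t) * v - Kfun beta (1 / t))%:E); last by [].
  by exists (1 / t); rewrite //= divr_ge0// ltW.
rewrite lte_fin Kfun_pos ?divr_gt0// div1r invrK -mulrBr mulr_gt0 ?invr_gt0//.
by rewrite mul1r subr_gt0.
Qed.


Lemma beta_pos : exists s0, 0 < s0 /\ 0 < beta s0.
Proof.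
apply: contrapT => nH.
have bz s : 0 < s -> beta s = 0.
  move=> s0; apply/eqP; rewrite eq_le b0 // andbT leNgt; apply/negP => bs.
  by apply: nH; exists s.
have ha : 0 < a / 2 < a by rewrite divr_gt0 //= ltr_pdivrMr // ltr_pMr // ltr1n.
have Kf := Kfin ha.
have [M HM] : exists M : R, K (a / 2) = M%:E.
  by exists (fine (K (a / 2))); rewrite fineK // ge0_fin_numE ?K_ge0.
set u := (`|M| + 1) * 2 / a.
have u0 : 0 < u by rewrite /u divr_gt0 // mulr_gt0 // ltr_wpDl.
have : ((u * (a / 2) - Kfun beta u)%:E <= K (a / 2))%E.
  apply: ereal_sup_ge; exists ((u * (a / 2) - Kfun beta u)%:E); last by [].
  by exists u; rewrite //= ltW.
rewrite HM lee_fin Kfun_pos // bz ?divr_gt0 // mulr0 subr0.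
have -> : u * (a / 2) = `|M| + 1 by rewrite /u; field; rewrite gt_eqF.
have := ler_norm M; lra.
Qed.

Lemma K_lin : exists C v0, [/\ 0 < C, 0 < v0 &
  forall v, 0 < v -> v <= v0 -> (K v <= (C * v)%:E)%E].
Proof.
have [s0 [s00 bs0]] := beta_pos.
exists (1 / s0), (beta s0); split => //; first by rewrite divr_gt0.
move=> v v0 vle; apply: ge_ereal_sup => _ [u /= u0 <-]; rewrite lee_fin.
have Cv : 0 <= 1 / s0 * v by rewrite mulr_ge0 // ?divr_ge0 // ltW.
have [uz|upos] := eqVneq u 0.
  by rewrite uz Kfun0 mul0r subr0.
have upos' : 0 < u by rewrite lt_neqAle eq_sym upos u0.
rewrite Kfun_pos //.
have bu : 0 <= beta (1 / u) by rewrite b0 // divr_gt0.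
have [us|us] := leP u (1 / s0).
  have : u * v <= 1 / s0 * v by rewrite ler_wpM2r // ltW.
  have : 0 <= u * beta (1 / u) by rewrite mulr_ge0 // ltW.
  lra.
have hb : beta s0 <= beta (1 / u).
  apply: bdec; first by rewrite divr_gt0.
  rewrite ler_pdivrMr // mulrC -ler_pdivrMr //; exact: ltW.
have : u * (v - beta s0) <= 0 by rewrite pmulr_rle0 // subr_le0.
have : u * beta s0 <= u * beta (1 / u) by rewrite ler_wpM2l // ltW.
lra.
Qed.

Definition gK v := ((K v)^-1)%E.
Definition GK v := fine (gK v).

Lemma gK_fin v : 0 < v -> gK v = (GK v)%:E /\ 0 <= GK v.
Proof.
move=> v0; rewrite /GK /gK.
have := K_gt0 v0; have := K_ge0 v.
case: (K v) => [r| |] //=.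
- move=> _; rewrite lte_fin => r0.
  by rewrite inver gt_eqF //= invr_ge0 ltW.
Qed.

Lemma GK_ge0 v : 0 < v -> 0 <= GK v.
Proof. by move=> /gK_fin []. Qed.

Lemma GK_anti v w : 0 < v -> v <= w -> GK w <= GK v.
Proof.
move=> v0 vw.
have w0 : 0 < w by exact: lt_le_trans vw.
have h : ((K w)^-1 <= (K v)^-1)%E.
  by rewrite lee_pV2 ?inE ?K_ge0 // K_le.
move: h; rewrite -/(gK w) -/(gK v) (gK_fin v0).1 (gK_fin w0).1 lee_fin //.
Qed.

Lemma GK_pos v : 0 < v -> (K v < +oo)%E ->
  0 < GK v /\ GK v * fine (K v) = 1.
Proof.
move=> v0; rewrite /GK /gK.
have := K_gt0 v0.
case: (K v) => [r| |] //=.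
rewrite lte_fin => r0 _.
rewrite inver gt_eqF //=; split; first by rewrite invr_gt0.
by rewrite mulVf // gt_eqF.
Qed.

Lemma GK_Kle v c : 0 < v -> 0 < c -> (K v <= c%:E)%E -> 1 / c <= GK v.
Proof.
move=> v0 c0; rewrite /GK /gK.
have := K_gt0 v0.
case: (K v) => [r| |] //=.
rewrite !lte_fin => r0; rewrite lee_fin => rc.
rewrite inver gt_eqF //= div1r.
by rewrite lef_pV2 ?posrE.
Qed.

Lemma gK_meas x0 (D : set R) : 0 < x0 -> measurable D ->
  D `<=` [set v | x0 <= v] -> measurable_fun D gK.
Proof.
move=> x00 mD Dx.
pose H v := GK (Num.max v x0).
have Hanti : {homo H : m n /~ n <= m}.
  move=> m n mn; apply: GK_anti.
    by apply: (lt_le_trans x00); rewrite le_max lexx orbT.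
  by rewrite ge_max !le_max mn lexx !orbT.
have mH : measurable_fun D H := nonincreasing_measurable mD Hanti.
apply: (eq_measurable_fun (EFin \o H)); last exact/measurable_EFinP.
move=> v; rewrite inE => /Dx /= vx0.
by rewrite /H (max_idPl vx0) (gK_fin (lt_le_trans x00 vx0)).1.
Qed.

Lemma int_le x0 (D : set R) c : 0 < x0 -> measurable D ->
  D `<=` [set v | x0 <= v] -> (forall v, D v -> GK v <= c) ->
  (\int[lebesgue_measure]_(v in D) gK v <= c%:E * lebesgue_measure D)%E.
Proof.
move=> x00 mD Dx hc.
rewrite -integral_cst //.
apply: ge0_le_integral => //.
- move=> v Dv; have [-> h] := gK_fin (lt_le_trans x00 (Dx _ Dv)).
  by rewrite lee_fin.
- exact: (gK_meas x00 mD Dx).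
- move=> v Dv; have [-> _] := gK_fin (lt_le_trans x00 (Dx _ Dv)).
  by rewrite lee_fin hc.
Qed.

Lemma int_ge x0 (D : set R) c : 0 < x0 -> measurable D ->
  D `<=` [set v | x0 <= v] -> 0 <= c -> (forall v, D v -> c <= GK v) ->
  (c%:E * lebesgue_measure D <= \int[lebesgue_measure]_(v in D) gK v)%E.
Proof.
move=> x00 mD Dx c0 hc.
rewrite -integral_cst //.
apply: ge0_le_integral => //.
- exact: (gK_meas x00 mD Dx).
- move=> v Dv; have [-> _] := gK_fin (lt_le_trans x00 (Dx _ Dv)).
  by rewrite lee_fin hc.
Qed.


Lemma FaE x : Fa beta a x = (\int[leb]_(v in `[x, a]) gK v)%E.
Proof. by []. Qed.

Lemma leb_co (x y : R) : x <= y -> lebesgue_measure [set` `[x, y[] = (y - x)%:E.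
Proof.
move=> xy; rewrite lebesgue_measure_itv /= lte_fin.
have [xy'|yx] := ltP x y; first by rewrite EFinB.
have -> : y = x by apply/eqP; rewrite eq_le xy yx.
by rewrite subrr.
Qed.

Lemma leb_cc (x y : R) : x <= y -> lebesgue_measure [set` `[x, y]] = (y - x)%:E.
Proof.
move=> xy; rewrite lebesgue_measure_itv /= lte_fin.
have [xy'|yx] := ltP x y; first by rewrite EFinB.
have -> : y = x by apply/eqP; rewrite eq_le xy yx.
by rewrite subrr.
Qed.

Lemma gK_ge0 v : 0 < v -> (0 <= gK v)%E.
Proof. by move=> v0; have [-> h] := gK_fin v0; rewrite lee_fin. Qed.

Lemma Fa_split (x y : R) : 0 < x -> x <= y -> y <= a ->
  Fa beta a x = (\int[leb]_(v in `[x, y[) gK v + Fa beta a y)%E.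
Proof.
move=> x0 xy ya; rewrite !FaE.
rewrite (@itv_bndbnd_setU _ _ (BLeft x) (BLeft y) (BRight a)); last 2 first.
  by rewrite bnd_simp.
  by rewrite bnd_simp.
have sub : [set` `[x, y[] `|` [set` `[y, a]] `<=` [set v | x <= v].
  move=> v [] /=; rewrite in_itv /= => /andP[] //.
  by move=> yv _; exact: le_trans yv.
rewrite ge0_integral_setU //.
- apply: (gK_meas x0) => //.
  by apply: measurableU; exact: measurable_itv.
- by move=> v /sub /= xv; apply: gK_ge0; exact: lt_le_trans xv.
- apply/disj_setPS => v [] /=; rewrite !in_itv /= => /andP[_ vy] /andP[yv _].
  by move: (lt_le_trans vy yv); rewrite ltxx.
Qed.

Lemma Fsplit (x y : R) : 0 < x -> x <= y -> y <= a ->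
  [/\ Fa beta a x \is a fin_num, Fa beta a y \is a fin_num,
      GK y * (y - x) <= fine (Fa beta a x) - fine (Fa beta a y) &
      fine (Fa beta a x) - fine (Fa beta a y) <= GK x * (y - x)].
Proof.
move=> x0 xy ya.
have y0 : 0 < y := lt_le_trans x0 xy.
have sub_y : [set` `[y, a]] `<=` [set v | y <= v].
  by move=> v; rewrite /= in_itv /= => /andP[].
have Fy0 : (0 <= Fa beta a y)%E.
  rewrite FaE; apply: integral_ge0 => v /sub_y /= yv.
  by apply: gK_ge0; exact: lt_le_trans yv.
have Fyle : (Fa beta a y <= (GK y * (a - y))%:E)%E.
  rewrite FaE EFinM -leb_cc //; apply: (int_le y0) => //.
  by move=> v /sub_y; exact: GK_anti.
have Fyf : Fa beta a y \is a fin_num.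
  by rewrite ge0_fin_numE // (le_lt_trans Fyle) // ltry.
have sub_x : [set` `[x, y[] `<=` [set v | x <= v].
  by move=> v; rewrite /= in_itv /= => /andP[].
set J := (\int[leb]_(v in `[x, y[) gK v)%E.
have J0 : (0 <= J)%E.
  apply: integral_ge0 => v /sub_x /= xv.
  by apply: gK_ge0; exact: lt_le_trans xv.
have Jle : (J <= (GK x * (y - x))%:E)%E.
  rewrite EFinM -leb_co //; apply: (int_le x0) => //.
  by move=> v /sub_x; exact: GK_anti.
have Jge : ((GK y * (y - x))%:E <= J)%E.
  rewrite EFinM -leb_co //; apply: (int_ge x0) => //; first exact: GK_ge0.
  move=> v vxy; apply: GK_anti.
    by apply: (lt_le_trans x0); exact: sub_x vxy.
  by move: vxy; rewrite /= in_itv /= => /andP[_ /ltW].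
have Jf : J \is a fin_num.
  by rewrite ge0_fin_numE // (le_lt_trans Jle) // ltry.
rewrite (Fa_split x0 xy ya) -/J.
rewrite fineD // addrK.
split => //; first by rewrite fin_numD Jf Fyf.
  by rewrite -lee_fin fineK.
by rewrite -lee_fin fineK.
Qed.


Let F x := fine (Fa beta a x).

Lemma F_fin x : 0 < x -> x <= a -> Fa beta a x \is a fin_num.
Proof. by move=> x0 xa; have [] := Fsplit x0 xa (lexx a). Qed.

Lemma F_ge0 x : 0 < x -> 0 <= F x.
Proof.
move=> x0; rewrite /F; apply: fine_ge0; rewrite FaE.
apply: integral_ge0 => v; rewrite /= in_itv /= => /andP[xv _].
by apply: gK_ge0; exact: lt_le_trans xv.
Qed.

Lemma F_noninc x y : 0 < x -> x <= y -> y <= a -> F y <= F x.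
Proof.
move=> x0 xy ya; have [_ _ h _] := Fsplit x0 xy ya.
have : 0 <= GK y * (y - x).
  by rewrite mulr_ge0 // ?GK_ge0 ?subr_ge0 //; exact: lt_le_trans xy.
rewrite /F; lra.
Qed.

Lemma F_strict x y : 0 < x -> x < y -> y <= a -> F y < F x.
Proof.
move=> x0 xy ya.
set m := (x + y) / 2.
have xm : x < m by rewrite /m ltr_pdivlMr //; lra.
have my : m < y by rewrite /m ltr_pdivrMr //; lra.
have m0 : 0 < m := lt_trans x0 xm.
have [_ _ h1 _] := Fsplit x0 (ltW xm) (le_trans (ltW my) ya).
have hm : 0 < m < a by rewrite m0 /= (lt_le_trans my ya).
have [Gm _] := GK_pos m0 (Kfin hm).
have := F_noninc m0 (ltW my) ya.
have : 0 < GK m * (m - x) by rewrite mulr_gt0 // subr_gt0.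
rewrite /F; lra.
Qed.

Lemma F_conv_le x y t : 0 < x -> x <= y -> y <= a -> 0 <= t <= 1 ->
  F (t * x + (1 - t) * y) <= t * F x + (1 - t) * F y.
Proof.
move=> x0 xy ya /andP[t0 t1].
set z := t * x + (1 - t) * y.
have xz : x <= z by rewrite /z; nra.
have zy : z <= y by rewrite /z; nra.
have z0 : 0 < z := lt_le_trans x0 xz.
have [_ _ h1 _] := Fsplit x0 xz (le_trans zy ya).
have [_ _ _ h2] := Fsplit z0 zy ya.
have e1 : z - x = (1 - t) * (y - x) by rewrite /z; ring.
have e2 : y - z = t * (y - x) by rewrite /z; ring.
rewrite e1 in h1; rewrite e2 in h2.
set A := F x - F z in h1; set B := F z - F y in h2.
set g := GK z in h1 h2.
have g0 : 0 <= g by exact: GK_ge0.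
have hA : t * (g * ((1 - t) * (y - x))) <= t * A by rewrite ler_wpM2l.
have hB : (1 - t) * B <= (1 - t) * (g * (t * (y - x))) by rewrite ler_wpM2l // subr_ge0.
have eq : t * (g * ((1 - t) * (y - x))) = (1 - t) * (g * (t * (y - x))) by ring.
rewrite /A /B in hA hB.
rewrite -/(F z) -/(F x) -/(F y) in hA hB *.
nra.
Qed.

Lemma F_conv x y t : 0 < x <= a -> 0 < y <= a -> 0 <= t <= 1 ->
  F (t * x + (1 - t) * y) <= t * F x + (1 - t) * F y.
Proof.
move=> /andP[x0 xa] /andP[y0 ya] /andP[t0 t1].
have [xy|yx] := leP x y.
  by apply: F_conv_le => //; rewrite t0 t1.
have -> : t * x + (1 - t) * y = (1 - t) * y + (1 - (1 - t)) * x by ring.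
have -> : t * F x + (1 - t) * F y = (1 - t) * F y + (1 - (1 - t)) * F x by ring.
apply: F_conv_le => //; first exact: ltW.
by apply/andP; split; lra.
Qed.

Lemma F_lip_le x y m : 0 < m -> m <= x -> x <= y -> y <= a ->
  `|F x - F y| <= GK m * `|x - y|.
Proof.
move=> m0 mx xy ya.
have x0 : 0 < x := lt_le_trans m0 mx.
have [_ _ h1 h2] := Fsplit x0 xy ya.
rewrite -/(F x) -/(F y) in h1 h2.
have d0 : 0 <= F x - F y by have := F_noninc x0 xy ya; lra.
rewrite (ger0_norm d0) distrC (ger0_norm (_ : 0 <= y - x)); last by rewrite subr_ge0.
apply: (le_trans h2); rewrite ler_wpM2r ?subr_ge0 //; exact: GK_anti.
Qed.

Lemma F_lip x y m : 0 < m -> m <= x -> m <= y -> x <= a -> y <= a ->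
  `|F x - F y| <= GK m * `|x - y|.
Proof.
move=> m0 mx my xa ya.
have [xy|yx] := leP x y; first exact: F_lip_le.
rewrite distrC [`|x - y|]distrC; apply: F_lip_le => //; exact: ltW.
Qed.

Lemma F_cont : {within `]0, a], continuous F}.
Proof.
apply/subspace_continuousP => x /=; rewrite in_itv /= => /andP[x0 xa].
apply/cvgrPdist_lt => e e0.
rewrite near_withinE.
set m := x / 2.
have m0 : 0 < m by rewrite divr_gt0.
set L := GK m + 1.
have L0 : 0 < L by rewrite /L ltr_wpDl // GK_ge0.
exists (Num.min m (e / L)) => /=; first by rewrite lt_min m0 divr_gt0.
move=> y /= hy; rewrite in_itv /= => /andP[y0 ya].
move: hy; rewrite lt_min => /andP[hm he].
have hx : x = m + m by rewrite /m; field.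
have my : m <= y by have := ler_norm (x - y); lra.
have mx : m <= x by lra.
apply: (le_lt_trans (F_lip m0 mx my xa ya)).
have Gm : 0 <= GK m := GK_ge0 m0.
have : GK m * `|x - y| <= GK m * (e / L) by rewrite ler_wpM2l // ltW.
have : GK m * (e / L) < e.
  have -> : GK m * (e / L) = e * (GK m / L) by field; rewrite gt_eqF.
  by rewrite gtr_pMr // ltr_pdivrMr // mul1r /L ltrDl.
lra.
Qed.

Lemma F_lim : Fa beta a x @[x --> 0^'+] --> +oo%E.
Proof.
have [C [v0 [C0 v00 Klin]]] := K_lin.
set w := Num.min v0 a.
have w0 : 0 < w by rewrite lt_min v00 a0.
have wv0 : w <= v0 by rewrite ge_min lexx.
have wa : w <= a by rewrite ge_min lexx orbT.
pose xs (j : nat) := w / 2 ^+ j.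
have xs0 j : 0 < xs j by rewrite /xs divr_gt0 // exprn_gt0.
have xsS j : xs j.+1 = xs j / 2 by rewrite /xs exprS; field; rewrite ?pnatr_eq0 ?expf_neq0 ?pnatr_eq0.
have xsle j : xs j <= w.
  rewrite /xs ler_pdivrMr ?exprn_gt0 //.
  have h2 : 1 <= (2 : R) ^+ j by apply: exprn_ege1; rewrite ler1n.
  by rewrite -{1}(mulr1 w) ler_wpM2l // ltW.
have key j : j%:R / (2 * C) <= F (xs j).
  elim: j => [|j IH]; first by rewrite mul0r F_ge0.
  have hle : xs j.+1 <= xs j.
    by rewrite xsS ler_pdivrMr // -{1}(mulr1 (xs j)) ler_wpM2l ?ltW //; lra.
  have [_ _ h _] := Fsplit (xs0 j.+1) hle (le_trans (xsle j) wa).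
  have hG : 1 / (C * xs j) <= GK (xs j).
    apply: GK_Kle => //; first by rewrite mulr_gt0.
    by apply: Klin => //; exact: le_trans (xsle j) wv0.
  have e1 : 1 / (C * xs j) * (xs j - xs j.+1) = 1 / (2 * C).
    have Cn : C != 0 := lt0r_neq0 C0.
    have xn : xs j != 0 := lt0r_neq0 (xs0 j).
    rewrite xsS; field; rewrite ?Cn ?xn //.
  have : 1 / (C * xs j) * (xs j - xs j.+1) <= GK (xs j) * (xs j - xs j.+1).
    by rewrite ler_wpM2r // subr_ge0.
  rewrite e1 => h2.
  have -> : j.+1%:R / (2 * C) = j%:R / (2 * C) + 1 / (2 * C).
    by rewrite -natr1 mulrDl.
  rewrite /F in h IH *; lra.
apply/cvgeyPge => M.
set k := Num.Def.archi_bound `|M * (2 * C)|.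
have hk : M * (2 * C) < k%:R.
  apply: (le_lt_trans (ler_norm _)); exact: archi_boundP.
have hM : M <= k%:R / (2 * C) by rewrite ler_pdivlMr ?mulr_gt0 // ltW.
rewrite /at_right near_withinE.
exists (xs k) => /=; first exact: xs0.
move=> y /= hy y0.
have yk : y <= xs k.
  by move: hy; rewrite sub0r normrN ger0_norm; [exact: ltW | exact: ltW].
have ya : y <= a := le_trans yk (le_trans (xsle k) wa).
rewrite -(fineK (F_fin y0 ya)) lee_fin.
apply: (le_trans hM); apply: (le_trans (key k)).
exact: F_noninc y0 yk (le_trans (xsle k) wa).
Qed.


Lemma decay_seq (x : nat -> R) (n : nat) (y : R) :
  (forall k, 0 <= x k) -> (forall k, x k.+1 <= x k) -> x 0 <= a ->
  (forall k, 0 < x k -> (K (x k) <= (x k - x k.+1)%:E)%E) ->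
  0 < y -> y <= a -> Fa beta a y = n%:R%:E -> x n <= y.
Proof.
move=> x0 xdec xa hK y0 ya Fy.
have claim k : x k = 0 \/ [/\ 0 < x k, x k <= a & k%:R <= F (x k)].
  elim: k => [|k IH].
    have [->|xp] := eqVneq (x 0) 0; first by left.
    right; have xp' : 0 < x 0 by rewrite lt_neqAle eq_sym xp x0.
    by split => //; rewrite F_ge0.
  have [->|xp] := eqVneq (x k.+1) 0; first by left.
  have xp' : 0 < x k.+1 by rewrite lt_neqAle eq_sym xp x0.
  have xk0 : 0 < x k := lt_le_trans xp' (xdec k).
  case: IH => [xk|[_ xka Fk]]; first by move: xk0; rewrite xk ltxx.
  right; split => //; first exact: le_trans (xdec k) xka.
  have Kf : (K (x k) < +oo)%E by apply: (le_lt_trans (hK k xk0)); exact: ltry.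
  have [Gp GK1] := GK_pos xk0 Kf.
  have Kle : fine (K (x k)) <= x k - x k.+1.
    rewrite -lee_fin fineK; first exact: hK.
    by rewrite ge0_fin_numE ?K_ge0.
  have [_ _ h _] := Fsplit xp' (xdec k) xka.
  rewrite -/(F (x k)) -/(F (x k.+1)) in h.
  have : GK (x k) * fine (K (x k)) <= GK (x k) * (x k - x k.+1).
    by rewrite ler_wpM2l // ltW.
  rewrite GK1 -natr1; lra.
case: (claim n) => [->|[xp xna Fn]]; first exact: ltW.
rewrite leNgt; apply/negP => yx.
have [_ _ h _] := Fsplit y0 (ltW yx) xna.
rewrite -/(F y) -/(F (x n)) in h.
have Fyn : F y = n%:R by rewrite /F Fy.
have Kf : (K (x n) < +oo)%E by apply: (le_lt_trans (hK n xp)); exact: ltry.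
have [Gp _] := GK_pos xp Kf.
have : 0 < GK (x n) * (x n - y) by rewrite mulr_gt0 // subr_gt0.
lra.
Qed.

End ana.

Theorem theorem8 (d : measure_display) (T : measurableType d) (R : realType)
  (mu : probability T R) (P : R.-pker T ~> T)
  (Pstar : (T -> R) -> (T -> R))
  (Phi : (T -> R) -> \bar R) (a : R) (beta : R -> R) :
  kinvariant mu P ->
  (* P^* is the adjoint of P in L^2(mu) *)
  (forall g, L2 mu g -> L2 mu (Pstar g)) ->
  (forall f g, L2 mu f -> L2 mu g -> ip mu (kop P f) g = ip mu f (Pstar g)) ->
  (* Phi : L^2(mu) -> [0, +oo], well defined on a.e.-classes *)
  (forall f, L2 mu f -> (0 <= Phi f)%E) ->
  (forall f g, L2 mu f -> L2 mu g -> {ae mu, forall x, f x = g x} -> Phi f = Phi g) ->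
  (forall f c, L2 mu f -> 0 < c -> Phi (fun x => c * f x) = ((c ^+ 2)%:E * Phi f)%E) ->
  (forall f n, L2 mu f -> (0 < n)%N -> (Phi (iter n (kop P) f) <= Phi f)%E) ->
  (forall f, L2 mu f ->
     ((norm2 mu (fun x => (f x - mean mu f)%R))%:E
        <= a%:E * Phi (fun x => (f x - mean mu f)%R))%E) ->
  a%:E = ereal_sup [set ((norm2 mu f)%:E / Phi f)%E
                   | f in [set f | L20 mu f /\ ~ {ae mu, forall x, f x = 0}]] ->
  0 < a ->
  (forall s, 0 < s -> 0 <= beta s) ->
  (forall s t, 0 < s -> s <= t -> beta t <= beta s) ->
  beta x @[x --> +oo] --> 0 ->
  (forall f s, L20 mu f -> 0 < s ->
     ((norm2 mu f)%:E <= ((s * dirichlet mu (fun g => Pstar (kop P g)) f)%R)%:E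
                          + (beta s)%:E * Phi f)%E) ->
  (* conclusions on F_a *)
  (forall x, 0 < x <= a -> Fa beta a x \is a fin_num) /\
  {within `]0, a], continuous (fun x => fine (Fa beta a x))} /\
  (forall x y t, 0 < x <= a -> 0 < y <= a -> 0 <= t <= 1 ->
     fine (Fa beta a (t * x + (1 - t) * y))
       <= t * fine (Fa beta a x) + (1 - t) * fine (Fa beta a y)) /\
  (forall x y, 0 < x -> x < y -> y <= a ->
     fine (Fa beta a y) < fine (Fa beta a x)) /\
  (Fa beta a x @[x --> 0^'+] --> +oo%E) /\
  (* decay bound: ||P^n f||^2 <= Phi(f) F_a^{-1}(n) *)
  (forall f n y, L20 mu f -> (0 < Phi f < +oo)%E -> (0 < n)%N ->
     0 < y <= a -> Fa beta a y = n%:R%:E ->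
     ((norm2 mu (iter n (kop P) f))%:E <= Phi f * y%:E)%E).
Proof.
move=> Pinv hPs adj Phi0 Phiae PhiZ PhiP Phia asup a0 b0 bdec blim hb.
set E := dirichlet mu (fun g => Pstar (kop P g)).
have Eeq : forall f, L2 mu f -> E f = norm2 mu f - norm2 mu (kop P f).
  by move=> f hf; exact: dirichlet_kop.
have E0 : forall f, L2 mu f -> 0 <= E f.
  by move=> f hf; rewrite Eeq // subr_ge0; exact: (kop_L2 Pinv hf).2.
have supge : forall f, L20 mu f -> ~ {ae mu, forall x, f x = 0} ->
    ((norm2 mu f)%:E / Phi f <= a%:E)%E.
  move=> f hf nf; rewrite asup; apply: ereal_sup_ge.
  by exists ((norm2 mu f)%:E / Phi f)%E => //; exists f.
have Kfin : forall v, 0 < v < a -> (Kstar beta v < +oo)%E.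
  move=> v /andP[v0 va].
  have : (v%:E < ereal_sup [set ((norm2 mu f)%:E / Phi f)%E
                   | f in [set f | L20 mu f /\ ~ {ae mu, forall x, f x = 0%R}]])%E.
    by rewrite -asup lte_fin.
  move=> /ereal_sup_gt [_ [f [hf nf] <-] vlt].
  have hL2 := hf.1.
  have n0 := norm2_ge0 mu f.
  have P0 := Phi0 f hL2.
  have ub := supge f hf nf.
  have [phi [Pe phi0]] : exists phi, Phi f = phi%:E /\ 0 < phi.
    move: vlt ub P0; case: (Phi f) => [r| |] //.
    - move=> vlt ub; rewrite lee_fin => r0; exists r; split => //.
      rewrite lt_neqAle r0 andbT; apply/negP => /eqP r00.
      move: ub vlt; rewrite -r00 inve0.
      have [->|npos] := eqVneq (norm2 mu f) 0.
        by rewrite mul0e lte_fin => _ /(lt_trans v0); rewrite ltxx.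
      rewrite gt0_muley; first by [].
      by rewrite lte_fin lt_neqAle eq_sym npos n0.
    - by rewrite invey mule0 lte_fin => /(lt_trans v0); rewrite ltxx.
  rewrite Pe inver gt_eqF // -EFinM lte_fin in vlt.
  have Pl : (Phi f <= phi%:E)%E by rewrite Pe.
  have hc := core (fun s s0 => hb f s hf s0) b0 phi0 P0 Pl (Eeq f hL2) (E0 f hL2).
  apply: (le_lt_trans (K_le beta (ltW vlt))).
  by apply: (le_lt_trans hc); exact: ltry.
split; first by move=> x /andP[x0 xa]; apply: F_fin.
split; first by apply: F_cont.
split; first by move=> x y t hx hy ht; apply: F_conv.
split; first by move=> x y x0 xy ya; apply: F_strict => //.
split; first by apply: F_lim => //.
move=> f n y hf /andP[P0 Pfin] n0 /andP[y0 ya] Fy.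
have hL2 := hf.1.
set phi := fine (Phi f).
have Pe : Phi f = phi%:E by rewrite fineK // ge0_fin_numE ?Pfin // ltW.
have phi0 : 0 < phi by rewrite -lte_fin -Pe.
pose fk k := iter k (kop P) f.
have hk : forall k, L20 mu (fk k).
  elim => [|k IH] //=.
  split; first exact: (kop_L2 Pinv IH.1).1.
  by rewrite (kop_mean Pinv IH.1); exact: IH.2.
have Pk : forall k, (Phi (fk k) <= phi%:E)%E.
  by case => [|k]; [rewrite /= Pe | rewrite -Pe; apply: PhiP].
pose x k := norm2 mu (fk k) / phi.
have x0 : forall k, 0 <= x k by move=> k; rewrite divr_ge0 ?norm2_ge0 // ltW.
have xdec : forall k, x k.+1 <= x k.
  move=> k; rewrite /x ler_pM2r ?invr_gt0 //.
  exact: (kop_L2 Pinv (hk k).1).2.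
have xa : x 0 <= a.
  have [az|naz] := pselect {ae mu, forall x, f x = 0}.
    suff -> : x 0 = 0 by exact: ltW.
    rewrite /x /= /norm2 (ae_eq_integral (cst 0%E)) ?integral0 ?mul0r //.
    - by apply/measurable_EFinP; apply: measurable_funX; exact: hL2.1.
    - by apply: filterS az => t ht _; rewrite /= ht expr0n.
  by have := supge f hf naz; rewrite Pe inver gt_eqF // -EFinM lee_fin.
have hK : forall k, 0 < x k -> (Kstar beta (x k) <= (x k - x k.+1)%:E)%E.
  move=> k _; rewrite /x -mulrBl.
  have hkL2 := (hk k).1.
  exact: (core (fun s s0 => hb (fk k) s (hk k) s0) b0 phi0 (Phi0 _ hkL2) (Pk k)
           (Eeq _ hkL2) (E0 _ hkL2)).
have := decay_seq blim x0 xdec xa hK y0 ya Fy.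
rewrite /x ler_pdivrMr // => h.
by rewrite Pe -EFinM lee_fin mulrC.
Qed.
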